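(* (1) For every packed word $g$, $g\leq\mathrm{Std}(g)$. (2) If $f,g$ are packed words with $f\leq g$, then $\mathrm{Std}(f)=\mathrm{Std}(g)$.
   Context: $[n]=\{1,\ldots,n\}$. A packed word of length $n$ is a word $f=f(1)\ldots f(n)$ of positive integers with $\{f(1),\ldots,f(n)\}=[\max f]$. For packed words $f,g$ of the same length $n$, $g\leq f$ means: for all $i,j\in[n]$, $f(i)\leq f(j)\Rightarrow g(i)\leq g(j)$; $f(i)>f(j)$ and $i<j\Rightarrow g(i)>g(j)$; $f(i)=f(j)\Rightarrow g(i)=g(j)$. The standardization $\mathrm{Std}(f)$ of a packed word $f$ of length $n$ is the unique permutation $\sigma$ of $[n]$ (viewed as the packed word $\sigma(1)\ldots\sigma(n)$) such that for all $i,j$: $f(i)<f(j)\Rightarrow\sigma(i)<\sigma(j)$, and ($f(i)=f(j)$ and $i<j$) $\Rightarrow\sigma(i)<\sigma(j)$. *)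

(* Defs.v *)
From mathcomp Require Import all_boot.
Set Implicit Arguments. Unset Strict Implicit. Unset Printing Implicit Defensive.

(* Words are seq nat; position i in [n] (1-based in the paper) is index i-1,
   i.e. f(i) = nth 0 f (i-1).  We use 0-based indices i < size f. *)

Definition wmax (f : seq nat) : nat := \max_(x <- f) x.

Definition packed (f : seq nat) : Prop :=
  forall k : nat, (k \in f) = (1 <= k <= wmax f).

Definition pw_le (g f : seq nat) : Prop :=
  size g = size f /\
  forall i j : nat, i < size f -> j < size f ->
    [/\ nth 0 f i <= nth 0 f j -> nth 0 g i <= nth 0 g j,
        nth 0 f i > nth 0 f j -> i < j -> nth 0 g i > nth 0 g j &
        nth 0 f i = nth 0 f j -> nth 0 g i = nth 0 g j].

Definition is_perm_word (n : nat) (s : seq nat) : Prop := perm_eq s (iota 1 n).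

Definition is_std (f s : seq nat) : Prop :=
  is_perm_word (size f) s /\
  forall i j : nat, i < size f -> j < size f ->
    (nth 0 f i < nth 0 f j -> nth 0 s i < nth 0 s j) /\
    (nth 0 f i = nth 0 f j -> i < j -> nth 0 s i < nth 0 s j).

(* Main.v *)
Require Import Defs.
From mathcomp Require Import all_boot.
From mathcomp Require Import zify.

Lemma count_iota_lt n v : 1 <= v <= n.+1 -> count (fun x => x < v) (iota 1 n) = v.-1.
Proof.
move=> /andP[v1 vn].
have -> : n = v.-1 + (n - v.-1) by lia.
rewrite iotaD count_cat.
rewrite (@eq_in_count _ _ predT (iota 1 v.-1)); last first.
  move=> x; rewrite mem_iota => /andP[_ h] /=; apply/idP; lia.
rewrite count_predT size_iota.
rewrite (@eq_in_count _ _ pred0); last first.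
  move=> x; rewrite mem_iota => /andP[h _] /=; apply/negbTE; lia.
by rewrite count_pred0 addn0.
Qed.

Lemma perm_unique n (s t : seq nat) :
  perm_eq s (iota 1 n) -> perm_eq t (iota 1 n) ->
  (forall i j, i < n -> j < n -> nth 0 s i < nth 0 s j -> nth 0 t i < nth 0 t j) ->
  (forall i j, i < n -> j < n -> nth 0 t i < nth 0 t j -> nth 0 s i < nth 0 s j) ->
  s = t.
Proof.
move=> ps pt hst hts.
have ss : size s = n by rewrite (perm_size ps) size_iota.
have st : size t = n by rewrite (perm_size pt) size_iota.
have key : forall u, perm_eq u (iota 1 n) -> size u = n -> forall i, i < n ->
   count (fun j => nth 0 u j < nth 0 u i) (iota 0 n) = (nth 0 u i).-1 /\ 1 <= nth 0 u i.
  move=> u pu su i hi.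
  have mi : nth 0 u i \in iota 1 n by rewrite -(perm_mem pu) mem_nth // su.
  move: (mi); rewrite mem_iota => /andP[h1 h2].
  split=> //.
  rewrite -(count_map (nth 0 u) (fun x => x < nth 0 u i)).
  have -> : map (nth 0 u) (iota 0 n) = u by rewrite -su -/(mkseq _ _) mkseq_nth.
  rewrite (permP pu) count_iota_lt //; apply/andP; split=> //; lia.
apply: (@eq_from_nth _ 0); first by rewrite ss st.
move=> i; rewrite ss => hi.
have [cs s1] := key s ps ss i hi.
have [ct t1] := key t pt st i hi.
suff : (nth 0 s i).-1 = (nth 0 t i).-1 by lia.
rewrite -cs -ct; apply: eq_in_count => j; rewrite mem_iota => hj /=.
apply/idP/idP; [apply: hst | apply: hts] => //; lia.
Qed.

Lemma std_order f s : is_std f s -> forall i j, i < size f -> j < size f ->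
  nth 0 s i < nth 0 s j -> (nth 0 f i < nth 0 f j \/ (nth 0 f i = nth 0 f j /\ i < j)).
Proof.
move=> [_ H] i j hi hj hs.
case: (ltngtP (nth 0 f i) (nth 0 f j)) => [h|h|h]; first by left.
  have := (H j i hj hi).1 h; lia.
right; split=> //.
case: (ltngtP i j) => [h'|h'|h'] //.
  have := (H j i hj hi).2 (esym h) h'; lia.
subst; lia.
Qed.

Theorem lemma24 :
  (forall g s : seq nat, packed g -> is_std g s -> pw_le g s) /\
  (forall f g sf sg : seq nat, packed f -> packed g -> size f = size g ->
     pw_le f g -> is_std f sf -> is_std g sg -> sf = sg).
Proof.
split.
  move=> g s _ [ps H].
  have ss : size s = size g by rewrite (perm_size ps) size_iota.
  split=> // i j; rewrite ss => hi hj; split.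
  - move=> h; rewrite leqNgt; apply/negP => h'.
    have := (H j i hj hi).1 h'; lia.
  - move=> h hij; rewrite ltnNge; apply/negP => h'.
    move: h'; rewrite leq_eqVlt => /orP[/eqP e|h'].
      have := (H i j hi hj).2 e hij; lia.
    have := (H i j hi hj).1 h'; lia.
  - move=> e.
    case: (ltngtP i j) => [h|h|h]; last by subst.
    + case: (ltngtP (nth 0 g i) (nth 0 g j)) => [h'|h'|h'] //.
      * have := (H i j hi hj).1 h'; lia.
      * have := (H j i hj hi).1 h'; lia.
    + case: (ltngtP (nth 0 g i) (nth 0 g j)) => [h'|h'|h'] //.
      * have := (H i j hi hj).1 h'; lia.
      * have := (H j i hj hi).1 h'; lia.
move=> f g sf sg _ _ sz [_ L] stf stg.
have sfg : is_std g sf.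
  split; first by rewrite -sz; exact: stf.1.
  move=> i j hi hj; have [_ H] := stf.
  have [L1 L2 L3] := L i j hi hj.
  have [L1' L2' L3'] := L j i hj hi.
  rewrite -sz in hi hj.
  split.
  - move=> h.
    have hle := L1 (ltnW h).
    move: hle; rewrite leq_eqVlt => /orP[/eqP e|h']; last exact: (H i j hi hj).1.
    case: (ltngtP i j) => [h2|h2|h2]; first exact: (H i j hi hj).2 e h2.
      have := L2' h h2; lia.
    subst; lia.
  - move=> e hij; exact: (H i j hi hj).2 (L3 e) hij.
apply: (@perm_unique (size g)); first exact: sfg.1.
- exact: stg.1.
- move=> i j hi hj h; have [_ H] := stg.
  case: (@std_order _ _ sfg _ _ hi hj h) => [h'|[h' h'']]; [exact: (H i j hi hj).1 | exact: (H i j hi hj).2].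
- move=> i j hi hj h; have [_ H] := sfg.
  case: (@std_order _ _ stg _ _ hi hj h) => [h'|[h' h'']]; [exact: (H i j hi hj).1 | exact: (H i j hi hj).2].
Qed.
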